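(* Let $(\Omega,\mathcal E_\Omega)$ be a finite-dimensional generalized probabilistic theory whose state space $\Omega$ is transitive and whose positive cone $V_+$ is self-dual with respect to $\langle\cdot,\cdot\rangle_{GL(\Omega)}$. Let $F=\{f_a\}_{a\in A}$ and $G=\{g_b\}_{b\in B}$ be ideal observables on $\Omega$ with outcome sets finite metric spaces $(A,d_A)$, $(B,d_B)$, and let $\widetilde M^{FG}=\{\widetilde m^{FG}_{ab}\}_{(a,b)\in A\times B}$ be an arbitrary observable on $A\times B$ with marginals $\widetilde M^F=\{\sum_b\widetilde m^{FG}_{ab}\}_a$ and $\widetilde M^G=\{\sum_a\widetilde m^{FG}_{ab}\}_b$. Then for all $\epsilon_1,\epsilon_2\in(0,1]$ with $\epsilon_1+\epsilon_2\le1$ there exists a state $\omega\in\Omega$ such that $$D_W(\widetilde M^F,F)\ge\frac{\epsilon_1}{2}W_{\epsilon_1+\epsilon_2}(\omega^F),\qquad D_W(\widetilde M^G,G)\ge\frac{\epsilon_2}{2}W_{\epsilon_1+\epsilon_2}(\omega^G).$$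
   Context: Setting: $V=\mathbb R^{N+1}$ with Euclidean inner product $(\cdot,\cdot)_E$. A state space $\Omega\subset V$ is a compact convex set with $\mathrm{span}(\Omega)=V$ and $0\notin\mathrm{aff}(\Omega)$; $V_+=\{\lambda\omega:\lambda\ge0,\omega\in\Omega\}$; the unit effect $u\in V^*$ satisfies $u(\omega)=1$ on $\Omega$; effects are $\mathcal E_\Omega=\{e\in V^*:0\le e(\omega)\le1\ \forall\omega\in\Omega\}$. An observable with finite outcome set $X$ is a family $\{e_x\}_{x\in X}$ of effects with $\sum_x e_x=u$ (the trivial observable $\{u\}$ is excluded). $\Omega^{\mathrm{ext}}$: extreme points of $\Omega$. An effect is pure if it is an extreme point of $\mathcal E_\Omega$; indecomposable if $e\neq0$ and $e=e_1+e_2$ with $e_1,e_2\in\mathcal E_\Omega$ forces $e_1,e_2$ to be scalar multiples of $e$. $F=\{f_a\}$ is ideal if each $f_a$ equals $\sum_{i\in I_a}e_i$ or $u-\sum_{i\in I_a}e_i$ for a finite family of pure indecomposable effects $e_i$. $GL(\Omega)$: group of linear bijections $T$ of $V$ with $T(\Omega)=\Omega$, $\mu$ its normalized Haar measure, $\langle x,y\rangle_{GL(\Omega)}=\int(Tx,Ty)_E\,d\mu(T)$. $\Omega$ is transitive if $GL(\Omega)$ acts transitively on $\Omega^{\mathrm{ext}}$; $V_+$ is self-dual w.r.t. $\langle\cdot,\cdot\rangle_{GL(\Omega)}$ if $V_+=\{y:\langle x,y\rangle_{GL(\Omega)}\ge0\ \forall x\in V_+\}$. $\omega^F=\{f_a(\omega)\}_a$.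 $O_{d_A}(a;w)=\{x\in A:d_A(x,a)\le w/2\}$; overall width $W_\epsilon(\omega^F)=\inf\{w>0:\exists a,\ \sum_{a'\in O_{d_A}(a;w)}f_{a'}(\omega)\ge1-\epsilon\}$. Werner's measure: with $\Lambda=\{h:A\to\mathbb R:|h(a_1)-h(a_2)|\le d_A(a_1,a_2)\ \forall a_1,a_2\}$, $D_W(\widetilde F,F)=\sup_{\omega\in\Omega}\sup_{h\in\Lambda}\left|\sum_{a\in A}h(a)\widetilde f_a(\omega)-\sum_{a\in A}h(a)f_a(\omega)\right|$. *)

(* Defs.v *)
From HB Require Import structures.
From mathcomp Require Import all_boot all_order all_algebra.
From mathcomp Require Import all_classical all_reals all_analysis.
Set Implicit Arguments. Unset Strict Implicit. Unset Printing Implicit Defensive.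
Import Order.TTheory GRing.Theory Num.Theory.
Import numFieldNormedType.Exports.
Local Open Scope classical_set_scope.
Local Open Scope ring_scope.

Section GPT.
Variables (R : realType) (n : nat).
(* V = R^n (row vectors); the dual V^* is identified with row vectors via the
   Euclidean pairing, so an effect e evaluated at x is [dotE e x]. *)
Notation V := 'rV[R]_n.

Definition dotE (x y : V) : R := \sum_(i < n) x 0 i * y 0 i.

Definition convex_set (S : set V) : Prop :=
  forall x y t, S x -> S y -> 0 <= t <= 1 -> S (t *: x + (1 - t) *: y).

Definition spans (S : set V) : Prop :=
  forall v : V, exists k (w : 'I_k -> V) (c : 'I_k -> R),
    (forall i, S (w i)) /\ v = \sum_(i < k) c i *: w i.

Definition in_affine_hull (S : set V) (v : V) : Prop :=
  exists k (w : 'I_k -> V) (c : 'I_k -> R),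
    (forall i, S (w i)) /\ \sum_(i < k) c i = 1 /\ v = \sum_(i < k) c i *: w i.

Definition state_space (Om : set V) : Prop :=
  compact Om /\ convex_set Om /\ spans Om /\ ~ in_affine_hull Om 0.

Definition unit_effect (Om : set V) (u : V) : Prop :=
  forall w, Om w -> dotE u w = 1.

Definition effects (Om : set V) : set V :=
  [set e | forall w, Om w -> 0 <= dotE e w <= 1].

Definition extreme_point (S : set V) (x : V) : Prop :=
  S x /\ forall y z t, S y -> S z -> 0 < t < 1 -> x = t *: y + (1 - t) *: z ->
    y = x /\ z = x.

Definition pure_effect (Om : set V) (e : V) : Prop := extreme_point (effects Om) e.

Definition indecomposable (Om : set V) (e : V) : Prop :=
  effects Om e /\ e != 0 /\
  forall e1 e2, effects Om e1 -> effects Om e2 -> e = e1 + e2 ->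
    (exists c : R, e1 = c *: e) /\ (exists c : R, e2 = c *: e).

(* observable with finite outcome set X; the trivial observable {u}
   (one outcome) is excluded *)
Definition observable (Om : set V) (u : V) (X : finType) (e : X -> V) : Prop :=
  (forall x, effects Om (e x)) /\ \sum_(x : X) e x = u /\ (1 < #|X|)%N.

Definition ideal_observable (Om : set V) (u : V) (X : finType) (f : X -> V) : Prop :=
  observable Om u f /\
  forall a, exists k (e : 'I_k -> V) (I : {set 'I_k}),
    (forall i, pure_effect Om (e i) /\ indecomposable Om (e i)) /\
    (f a = \sum_(i in I) e i \/ f a = u - \sum_(i in I) e i).

Definition GLOm (Om : set V) : set 'M[R]_n :=
  [set T | T \in unitmx /\ [set x *m T | x in Om] = Om].

Definition transitive_ss (Om : set V) : Prop :=
  forall x y, extreme_point Om x -> extreme_point Om y ->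
    exists T, GLOm Om T /\ x *m T = y.

(* A normalized Haar integral on the compact group GL(Omega), given as a
   positive normalized left- and right-invariant linear functional on
   continuous real functions (Riesz representation of the Haar measure). *)
Definition haar_integral (Om : set V) (mu : ('M[R]_n -> R) -> R) : Prop :=
  (forall f g : 'M[R]_n -> R, continuous f -> continuous g ->
     mu (fun T => f T + g T) = mu f + mu g) /\
  (forall (c : R) (f : 'M[R]_n -> R), continuous f ->
     mu (fun T => c * f T) = c * mu f) /\
  (forall f : 'M[R]_n -> R, continuous f ->
     (forall T, GLOm Om T -> 0 <= f T) -> 0 <= mu f) /\
  mu (fun _ => 1) = 1 /\
  (forall (f : 'M[R]_n -> R) S, continuous f -> GLOm Om S ->
     mu (fun T => f (S *m T)) = mu f /\ mu (fun T => f (T *m S)) = mu f).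

Definition inner_GL (mu : ('M[R]_n -> R) -> R) (x y : V) : R :=
  mu (fun T => dotE (x *m T) (y *m T)).

Definition cone (Om : set V) : set V :=
  [set v | exists (l : R) w, 0 <= l /\ Om w /\ v = l *: w].

Definition self_dual_GL (Om : set V) : Prop :=
  exists mu, haar_integral Om mu /\
    cone Om = [set y | forall x, cone Om x -> 0 <= inner_GL mu x y].

Definition metric (A : finType) (d : A -> A -> R) : Prop :=
  (forall x y, 0 <= d x y) /\ (forall x y, d x y = 0 <-> x = y) /\
  (forall x y, d x y = d y x) /\ (forall x y z, d x z <= d x y + d y z).

Definition overall_width (A : finType) (d : A -> A -> R) (f : A -> V)
    (eps : R) (w : V) : R :=
  inf [set wd : R | 0 < wd /\ exists a : A,
         1 - eps <= \sum_(a' : A | d a' a <= wd / 2) dotE (f a') w].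

Definition Lip1 (A : finType) (d : A -> A -> R) : set (A -> R) :=
  [set h | forall a1 a2, `|h a1 - h a2| <= d a1 a2].

Definition werner_D (Om : set V) (A : finType) (d : A -> A -> R)
    (ft f : A -> V) : \bar R :=
  ereal_sup [set r : \bar R | exists (h : A -> R) (w : V),
     Lip1 d h /\ Om w /\
     r = (`| \sum_(a : A) h a * dotE (ft a) w
             - \sum_(a : A) h a * dotE (f a) w |)%:E].
End GPT.

(* Main.v *)
Require Import Defs.
From HB Require Import structures.
From mathcomp Require Import all_boot all_order all_algebra.
From mathcomp Require Import all_classical all_reals all_analysis.
From mathcomp.algebra_tactics Require Import ring lra.
Import Order.TTheory GRing.Theory Num.Theory.
Local Open Scope classical_set_scope.
Local Open Scope ring_scope.

Module Helpers.
Import numFieldNormedType.Exports.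
Local Open Scope classical_set_scope.
Local Open Scope ring_scope.

Section DotE.
Variables (R : realType) (n : nat).
Implicit Types x y z : 'rV[R]_n.

Lemma dotEC x y : dotE x y = dotE y x.
Proof. by apply: eq_bigr => i _; rewrite mulrC. Qed.

Lemma dotEDl x y z : dotE (x + y) z = dotE x z + dotE y z.
Proof. by rewrite /dotE -big_split; apply: eq_bigr => i _; rewrite mxE mulrDl. Qed.

Lemma dotEZl (a : R) x z : dotE (a *: x) z = a * dotE x z.
Proof. by rewrite /dotE mulr_sumr; apply: eq_bigr => i _; rewrite mxE mulrA. Qed.

Lemma dotEDr x y z : dotE z (x + y) = dotE z x + dotE z y.
Proof. by rewrite dotEC dotEDl !(dotEC z). Qed.

Lemma dotEZr (a : R) x z : dotE z (a *: x) = a * dotE z x.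
Proof. by rewrite dotEC dotEZl dotEC. Qed.

Lemma dotE0l z : dotE 0 z = 0.
Proof. by rewrite -(scale0r (0 : 'rV[R]_n)) dotEZl mul0r. Qed.

Lemma dotE0r z : dotE z 0 = 0.
Proof. by rewrite dotEC dotE0l. Qed.

Lemma dotENl x z : dotE (- x) z = - dotE x z.
Proof. by rewrite -scaleN1r dotEZl mulN1r. Qed.

Lemma dotEBl x y z : dotE (x - y) z = dotE x z - dotE y z.
Proof. by rewrite dotEDl dotENl. Qed.

Lemma dotE_suml (I : Type) (r : seq I) (P : pred I) (F : I -> 'rV[R]_n) z :
  dotE (\sum_(i <- r | P i) F i) z = \sum_(i <- r | P i) dotE (F i) z.
Proof.
elim/big_rec2: _ => [|i y1 y2 _ <-]; first by rewrite dotE0l.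
by rewrite dotEDl.
Qed.

Lemma dotE_sumr (I : Type) (r : seq I) (P : pred I) (F : I -> 'rV[R]_n) z :
  dotE z (\sum_(i <- r | P i) F i) = \sum_(i <- r | P i) dotE z (F i).
Proof.
rewrite dotEC dotE_suml; apply: eq_bigr => i _; exact: dotEC.
Qed.

Lemma dotE_ge0 x : 0 <= dotE x x.
Proof. by apply: sumr_ge0 => i _; rewrite -expr2 sqr_ge0. Qed.

End DotE.

Section Cont.
Variable (R : realType).

Lemma cont_sum (T : topologicalType) (I : Type) (r : seq I) (F : I -> T -> R) :
  (forall i, continuous (F i)) -> continuous (fun x => \sum_(i <- r) F i x).
Proof.
move=> hF; elim: r => [|i r IH].
  have -> : (fun x : T => \sum_(i <- [::]) F i x) = (fun=> 0).
    by apply: funext => x; rewrite big_nil.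
  exact: cst_continuous.
have -> : (fun x : T => \sum_(j <- i :: r) F j x) = (fun x => F i x + \sum_(j <- r) F j x).
  by apply: funext => x; rewrite big_cons.
move=> x; exact: (@continuousD R R^o T (F i) _ x (hF i x) (IH x)).
Qed.

Lemma cont_mul (T : topologicalType) (f g : T -> R) :
  continuous f -> continuous g -> continuous (fun x => f x * g x).
Proof. move=> hf hg x; exact: (@continuousM R T f g x (hf x) (hg x)). Qed.

Lemma cont_dotM (n : nat) (x y : 'rV[R]_n) :
  continuous (fun T : 'M[R]_n => dotE (x *m T) (y *m T)).
Proof.
rewrite /dotE; apply: cont_sum => k; apply: cont_mul.
- have -> : (fun T : 'M[R]_n => (x *m T) 0 k) = (fun T => \sum_(j <- index_enum 'I_n) x 0 j * T j k).
    by apply: funext => T; rewrite mxE.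
  apply: cont_sum => j; apply: cont_mul; first exact: cst_continuous.
  exact: coord_continuous.
- have -> : (fun T : 'M[R]_n => (y *m T) 0 k) = (fun T => \sum_(j <- index_enum 'I_n) y 0 j * T j k).
    by apply: funext => T; rewrite mxE.
  apply: cont_sum => j; apply: cont_mul; first exact: cst_continuous.
  exact: coord_continuous.
Qed.

Lemma cont_quad (n : nat) (G : 'M[R]_n) :
  continuous (fun x : 'rV[R]_n => dotE (x *m G) x).
Proof.
rewrite /dotE; apply: cont_sum => k; apply: cont_mul; last exact: coord_continuous.
have -> : (fun x : 'rV[R]_n => (x *m G) 0 k) = (fun x => \sum_(j <- index_enum 'I_n) x 0 j * G j k).
  by apply: funext => T; rewrite mxE.
apply: cont_sum => j; apply: cont_mul; last exact: cst_continuous.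
exact: coord_continuous.
Qed.

End Cont.


Section Width.
Variables (R : realType) (n : nat).

Lemma width_bound (A : finType) (d : A -> A -> R) (f : A -> 'rV[R]_n)
  (w : 'rV[R]_n) (a : A) (D e1 e : R) :
  (forall x y, 0 <= d x y) -> (forall a', 0 <= dotE (f a') w) ->
  \sum_a' dotE (f a') w = 1 -> 0 <= D -> 0 < e1 -> 0 <= e ->
  e1 * (\sum_a' d a' a * dotE (f a') w) <= e * D ->
  e1 / 2 * overall_width d f e w <= D.
Proof.
move=> hd hq hs hD he1 he hx.
set x := \sum_a' d a' a * dotE (f a') w in hx.
have lb : has_lbound [set wd : R | 0 < wd /\ exists a0 : A,
         1 - e <= \sum_(a' : A | d a' a0 <= wd / 2) dotE (f a') w].
  by exists 0 => y [hy _]; exact: ltW.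
have Wle : overall_width d f e w <= 2 * D / e1.
  apply/unstable.ler_gtP => z hz.
  apply: (ge_inf lb); split.
    by apply: le_lt_trans hz; rewrite divr_ge0 ?mulr_ge0 // ltW.
  exists a.
  set r := z / 2.
  have rD : D < e1 * r.
    by move: hz; rewrite /r ltr_pdivrMr // => h; lra.
  have rpos : 0 < r.
    by have := le_lt_trans hD rD; rewrite pmulr_rgt0.
  set out := \sum_(a' | ~~ (d a' a <= r)) dotE (f a') w.
  have hmark : r * out <= x.
    rewrite /x (bigID (fun a' => d a' a <= r)) /= mulr_sumr.
    set Sin := \sum_(i | d i a <= r) _.
    have h2 : 0 <= Sin by apply: sumr_ge0 => i _; rewrite mulr_ge0.
    suff : \sum_(i | ~~ (d i a <= r)) r * dotE (f i) w <=
           \sum_(i | ~~ (d i a <= r)) d i a * dotE (f i) w by lra.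
    apply: ler_sum => i /negP /negP; rewrite -ltNge => hi.
    by rewrite ler_wpM2r // ltW.
  have xer : x <= e * r.
    rewrite -(ler_pM2l he1); apply: le_trans hx _.
    by rewrite mulrCA ler_wpM2l // ltW.
  have oute : out <= e.
    by rewrite -(ler_pM2l rpos) [r * e]mulrC; apply: le_trans hmark xer.
  have := hs; rewrite (bigID (fun a' => d a' a <= r)) /= -/out => hs'.
  lra.
have : e1 / 2 * overall_width d f e w <= e1 / 2 * (2 * D / e1).
  by rewrite ler_wpM2l // divr_ge0 // ltW.
have -> : e1 / 2 * (2 * D / e1) = D by field; rewrite gt_eqF.
by [].
Qed.

Lemma choice_lemma (P : finType) (X Y m : P -> R) (DF DG e1 e2 : R) :
  (forall p, 0 <= X p) -> (forall p, 0 <= Y p) -> (forall p, 0 <= m p) ->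
  (forall p, m p = 0 -> X p = 0 /\ Y p = 0) ->
  0 < \sum_p m p -> \sum_p X p <= (\sum_p m p) * DF ->
  \sum_p Y p <= (\sum_p m p) * DG -> 0 <= DF -> 0 <= DG -> 0 < e1 -> 0 < e2 ->
  exists p, 0 < m p /\ e1 * X p <= (e1 + e2) * m p * DF /\
     e2 * Y p <= (e1 + e2) * m p * DG.
Proof.
move=> hX hY hm h0 hU hSX hSY hDF hDG he1 he2.
set U := \sum_p m p in hU hSX hSY.
have ex_neg : forall Phi : P -> R, (forall p, m p = 0 -> Phi p = 0) ->
    \sum_p Phi p <= 0 -> exists p, 0 < m p /\ Phi p <= 0.
  move=> Phi hPhi hS; apply/not_existsP => hno.
  have pos : forall p, 0 < m p -> 0 < Phi p.
    move=> p hp; rewrite ltNge; apply/negP => hle; apply: (hno p); split => //.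
  have [p0 hp0] : exists p, 0 < m p.
    apply/not_existsP => hn; move: hU; rewrite /U big1 ?ltxx // => p _.
    apply/eqP; rewrite eq_le hm andbT leNgt; apply/negP => hp; exact: (hn p).
  have : 0 < \sum_p Phi p.
    rewrite (bigD1 p0) //=.
    have : 0 <= \sum_(p | p != p0) Phi p.
      apply: sumr_ge0 => p _; have [mp|hp] := eqVneq (m p) 0.
        by rewrite hPhi.
      by rewrite ltW // pos // lt_neqAle eq_sym hp hm.
    have := pos p0 hp0; lra.
  by rewrite ltNge hS.
have X0 : DF = 0 -> forall p, X p = 0.
  move=> D0 p; have hs : \sum_p X p = 0.
    by apply/eqP; rewrite eq_le sumr_ge0 // andbT; apply: le_trans hSX _; rewrite D0 mulr0.
  exact: (psumr_eq0P (fun i _ => hX i) hs).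
have Y0 : DG = 0 -> forall p, Y p = 0.
  move=> D0 p; have hs : \sum_p Y p = 0.
    by apply/eqP; rewrite eq_le sumr_ge0 // andbT; apply: le_trans hSY _; rewrite D0 mulr0.
  exact: (psumr_eq0P (fun i _ => hY i) hs).
have [DF0|DFp] := eqVneq DF 0.
  pose Phi := fun p => e2 * Y p - (e1 + e2) * m p * DG.
  have hA : forall p, m p = 0 -> Phi p = 0.
    by move=> p mp; rewrite /Phi (h0 p mp).2 mp !mulr0 mul0r subrr.
  have hB : \sum_p Phi p <= 0.
    rewrite /Phi sumrB -mulr_sumr -mulr_suml -mulr_sumr -/U.
    have : e2 * \sum_p Y p <= e2 * (U * DG) by rewrite ler_wpM2l // ltW.
    have : e2 * (U * DG) <= (e1 + e2) * (U * DG).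
      by apply: ler_wpM2r; [rewrite mulr_ge0 // ltW | lra].
    rewrite mulrA; lra.
  have [p [hp hP]] := ex_neg Phi hA hB.
  exists p; split => //; split; first by rewrite X0 // DF0 !mulr0.
  by move: hP; rewrite /Phi subr_le0.
have [DG0|DGp] := eqVneq DG 0.
  pose Phi := fun p => e1 * X p - (e1 + e2) * m p * DF.
  have hA : forall p, m p = 0 -> Phi p = 0.
    by move=> p mp; rewrite /Phi (h0 p mp).1 mp !mulr0 mul0r subrr.
  have hB : \sum_p Phi p <= 0.
    rewrite /Phi sumrB -mulr_sumr -mulr_suml -mulr_sumr -/U.
    have : e1 * \sum_p X p <= e1 * (U * DF) by rewrite ler_wpM2l // ltW.
    have : e1 * (U * DF) <= (e1 + e2) * (U * DF).
      by apply: ler_wpM2r; [rewrite mulr_ge0 // ltW | lra].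
    rewrite mulrA; lra.
  have [p [hp hP]] := ex_neg Phi hA hB.
  exists p; split => //; split; last by rewrite Y0 // DG0 !mulr0.
  by move: hP; rewrite /Phi subr_le0.
have DFpos : 0 < DF by rewrite lt_neqAle eq_sym DFp hDF.
have DGpos : 0 < DG by rewrite lt_neqAle eq_sym DGp hDG.
pose Phi := fun p => e1 * X p * DG + e2 * Y p * DF - (e1 + e2) * m p * DF * DG.
have hA : forall p, m p = 0 -> Phi p = 0.
  by move=> p mp; rewrite /Phi (h0 p mp).1 (h0 p mp).2 mp !mulr0 !mul0r; lra.
have hB : \sum_p Phi p <= 0.
  have -> : \sum_p Phi p = e1 * (\sum_p X p) * DG + e2 * (\sum_p Y p) * DF
      - (e1 + e2) * U * DF * DG.
    rewrite /U !mulr_sumr !mulr_suml -big_split -sumrB /=.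
    by apply: eq_bigr => p _; rewrite /Phi.
  have b1 : e1 * (\sum_p X p) * DG <= e1 * (U * DF) * DG.
    by apply: ler_wpM2r; [exact: ltW | apply: ler_wpM2l; [exact: ltW | done]].
  have b2 : e2 * (\sum_p Y p) * DF <= e2 * (U * DG) * DF.
    by apply: ler_wpM2r; [exact: ltW | apply: ler_wpM2l; [exact: ltW | done]].
  have -> : (e1 + e2) * U * DF * DG = e1 * (U * DF) * DG + e2 * (U * DG) * DF.
    by ring.
  lra.
have [p [hp hP]] := ex_neg Phi hA hB.
exists p; split => //.
have a1 : 0 <= e1 * X p * DG by rewrite !mulr_ge0 // ltW.
have a2 : 0 <= e2 * Y p * DF by rewrite !mulr_ge0 // ltW.
rewrite /Phi in hP.
split.
  by rewrite -(ler_pM2r DGpos); lra.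
by rewrite -(ler_pM2r DFpos); lra.
Qed.

Lemma werner_le (Om : set 'rV[R]_n) (u : 'rV[R]_n) (A : finType) (d : A -> A -> R)
  (hd : metric d) (f ft : A -> 'rV[R]_n)
  (hfe : forall a, effects Om (f a)) (hfs : \sum_a f a = u)
  (hu : unit_effect Om u) (DF : R) (hD : werner_D Om d ft f = DF%:E)
  (w : 'rV[R]_n) (a' : A) :
  Om w -> dotE (f a') w = 1 -> \sum_a d a a' * dotE (ft a) w <= DF.
Proof.
move=> hw hfa.
case: hd => hd0 [hdeq [hdsym hdtri]].
have hs : \sum_a dotE (f a) w = 1 by rewrite -dotE_suml hfs hu.
rewrite (bigD1 a') //= hfa in hs.
have hs0 : \sum_(a | a != a') dotE (f a) w = 0 by lra.
have f0 : forall a, a != a' -> dotE (f a) w = 0.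
  move=> a ha; apply: (psumr_eq0P _ hs0) => // i _.
  by case/andP: (hfe i w hw).
have z : \sum_a d a a' * dotE (f a) w = 0.
  apply: big1 => a _; have [->|ne] := eqVneq a a'.
    by rewrite (hdeq a' a').2 // mul0r.
  by rewrite f0 // mulr0.
have mem : [set r : \bar R | exists (h : A -> R) (w : 'rV[R]_n),
     Lip1 d h /\ Om w /\
     r = (`| \sum_(a : A) h a * dotE (ft a) w
             - \sum_(a : A) h a * dotE (f a) w |)%:E]
   (`| \sum_a d a a' * dotE (ft a) w - \sum_a d a a' * dotE (f a) w |)%:E.
  exists (fun a => d a a'), w; split => //.
  move=> a1 a2; rewrite ler_norml.
  have := hdtri a1 a2 a'; have := hdtri a2 a1 a'; rewrite (hdsym a2 a1); lra.
have := ereal_sup_ubound mem; rewrite -/(werner_D Om d ft f) hD lee_fin z subr0.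
by apply: le_trans; apply: ler_norm.
Qed.

Lemma werner_ge0 (Om : set 'rV[R]_n) (A : finType) (d : A -> A -> R)
  (hd : metric d) (f ft : A -> 'rV[R]_n) :
  (exists w, Om w) -> (0%:E <= werner_D Om d ft f)%E.
Proof.
case=> w hw; apply: ereal_sup_ubound; exists (fun=> 0), w; split.
  by move=> a1 a2; rewrite subrr normr0; case: hd => hd0 _; apply: hd0.
split => //; congr (_%:E).
by rewrite !big1 ?subrr ?normr0 // => a _; rewrite mul0r.
Qed.

End Width.


Section GPTproof.
Variables (R : realType) (n : nat) (Om : set 'rV[R]_n) (u : 'rV[R]_n)
  (mu : ('M[R]_n -> R) -> R).
Hypotheses (hOm : state_space Om) (hu : unit_effect Om u)
  (htr : transitive_ss Om) (hmu : haar_integral Om mu)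
  (hsd : cone Om = [set y | forall x, cone Om x -> 0 <= inner_GL mu x y]).

Local Notation ip := (inner_GL mu).
Local Notation V := 'rV[R]_n.
Implicit Types (x y z e v w : 'rV[R]_n).

Lemma mu_sum (I : Type) (r : seq I) (F : I -> 'M[R]_n -> R) :
  (forall i, continuous (F i)) ->
  mu (fun T => \sum_(i <- r) F i T) = \sum_(i <- r) mu (F i).
Proof.
case: hmu => hadd [hscal _] hF.
elim: r => [|i r IH].
  rewrite big_nil.
  have -> : (fun T : 'M[R]_n => \sum_(i <- [::]) F i T) = (fun T => 0 * 1).
    by apply: funext => T; rewrite big_nil mul0r.
  by rewrite hscal ?mul0r //; exact: cst_continuous.
rewrite big_cons -IH.
have -> : (fun T : 'M[R]_n => \sum_(j <- i :: r) F j T) =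
          (fun T => F i T + \sum_(j <- r) F j T).
  by apply: funext => T; rewrite big_cons.
by rewrite hadd //; apply: cont_sum.
Qed.

Lemma mu_scal (c : R) (f : 'M[R]_n -> R) : continuous f ->
  mu (fun T => c * f T) = c * mu f.
Proof. by case: hmu => _ [hscal _]; apply: hscal. Qed.

Definition Gm : 'M[R]_n := \matrix_(i, j) ip (delta_mx 0 i) (delta_mx 0 j).

Lemma ipE x y : ip x y = dotE (x *m Gm) y.
Proof.
have e1 : (fun T : 'M[R]_n => dotE (x *m T) (y *m T)) =
   (fun T => \sum_(i < n) \sum_(j < n)
       (x 0 i * y 0 j) * dotE (delta_mx 0 i *m T) (delta_mx 0 j *m T)).
  apply: funext => T.
  rewrite {1}(row_sum_delta x) {1}(row_sum_delta y) !mulmx_suml dotE_suml.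
  apply: eq_bigr => i _; rewrite dotE_sumr; apply: eq_bigr => j _.
  rewrite -!scalemxAl dotEZl dotEZr; ring.
rewrite /inner_GL e1 mu_sum; last first.
  move=> i; apply: cont_sum => j; apply: cont_mul; first exact: cst_continuous.
  exact: cont_dotM.
have e2 : forall i : 'I_n, mu (fun T => \sum_(j < n) (x 0 i * y 0 j) *
      dotE (delta_mx 0 i *m T) (delta_mx 0 j *m T)) =
    \sum_(j < n) (x 0 i * y 0 j) * ip (delta_mx 0 i) (delta_mx 0 j).
  move=> i; rewrite mu_sum; last first.
    by move=> j; apply: cont_mul; [exact: cst_continuous | exact: cont_dotM].
  by apply: eq_bigr => j _; rewrite mu_scal //; exact: cont_dotM.
rewrite (eq_bigr _ (fun i _ => e2 i)) /dotE.
rewrite exchange_big /=; apply: eq_bigr => j _.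
rewrite !mxE mulr_suml; apply: eq_bigr => i _.
rewrite mxE; ring.
Qed.

Lemma ipC x y : ip x y = ip y x.
Proof. by rewrite /inner_GL; congr (mu _); apply: funext => T; exact: dotEC. Qed.

Lemma ipDl x y z : ip (x + y) z = ip x z + ip y z.
Proof. by rewrite !ipE mulmxDl dotEDl. Qed.

Lemma ipZl (a : R) x z : ip (a *: x) z = a * ip x z.
Proof. by rewrite !ipE -scalemxAl dotEZl. Qed.

Lemma ipDr x y z : ip z (x + y) = ip z x + ip z y.
Proof. by rewrite !ipE dotEDr. Qed.

Lemma ipZr (a : R) x z : ip z (a *: x) = a * ip z x.
Proof. by rewrite !ipE dotEZr. Qed.

Lemma ipNl x z : ip (- x) z = - ip x z.
Proof. by rewrite -scaleN1r ipZl mulN1r. Qed.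

Lemma ipNr x z : ip z (- x) = - ip z x.
Proof. by rewrite -scaleN1r ipZr mulN1r. Qed.

Lemma ip0l z : ip 0 z = 0.
Proof. by rewrite ipE mul0mx dotE0l. Qed.

Lemma ip_ge0 x : 0 <= ip x x.
Proof.
case: hmu => _ [_ [hpos _]]; apply: hpos; first exact: cont_dotM.
by move=> T _; exact: dotE_ge0.
Qed.

Lemma ip_inv S x y : GLOm Om S -> ip (x *m S) (y *m S) = ip x y.
Proof.
case: hmu => _ [_ [_ [_ hinv]]] hS.
have := (hinv (fun T => dotE (x *m T) (y *m T)) S (cont_dotM _ _ x y) hS).1.
rewrite /inner_GL => <-; congr (mu _); apply: funext => T.
by rewrite !mulmxA.
Qed.

Lemma ip_exp (a : R) x y :
  ip (a *: x + y) (a *: x + y) = a * a * ip x x + 2 * a * ip x y + ip y y.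
Proof.
rewrite !ipDl !ipDr !ipZl !ipZr [ip y x]ipC; ring.
Qed.

Lemma cone_dualP y : cone Om y <-> (forall x, cone Om x -> 0 <= ip x y).
Proof.
split=> h; first by move: h; rewrite {1}hsd.
by rewrite hsd.
Qed.

Lemma Om_cone w : Om w -> cone Om w.
Proof. by move=> hw; exists 1, w; rewrite scale1r ler01. Qed.

Lemma Om0 : ~ Om 0.
Proof.
case: hOm => _ [_ [_ hna]] h0; apply: hna.
exists 1%N, (fun _ => 0), (fun _ => 1); split => //.
by rewrite !big_ord1 scale1r.
Qed.

Lemma nondeg z : (forall x, ip z x = 0) -> z = 0.
Proof.
move=> hz.
have cz : cone Om z by apply/cone_dualP => x _; rewrite ipC hz.
have cnz : cone Om (- z) by apply/cone_dualP => x _; rewrite ipC ipNl hz oppr0.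
case: cz => l [w [hl [hw ez]]]; case: cnz => l' [w' [hl' [hw' enz]]].
have [l0|lpos] := eqVneq l 0; first by rewrite ez l0 scale0r.
have [l'0|l'pos] := eqVneq l' 0.
  by apply/eqP; rewrite -oppr_eq0 enz l'0 scale0r.
have lp : 0 < l by rewrite lt_neqAle eq_sym lpos hl.
have lp' : 0 < l' by rewrite lt_neqAle eq_sym l'pos hl'.
exfalso; apply: Om0.
case: hOm => _ [hconv _].
have ht : 0 <= l / (l + l') <= 1.
  apply/andP; split; first by apply: divr_ge0 => //; lra.
  by rewrite ler_pdivrMr ?mul1r; lra.
have := hconv w w' _ hw hw' ht.
have -> : l / (l + l') *: w + (1 - l / (l + l')) *: w' =
          (l + l')^-1 *: (l *: w + l' *: w').
  have -> : 1 - l / (l + l') = l' / (l + l') by field; lra.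
  by rewrite scalerDr !scalerA ![(l + l')^-1 * _]mulrC.
by rewrite -ez -enz subrr scaler0.
Qed.

Lemma ip_pd x : ip x x = 0 -> x = 0.
Proof.
move=> hx; apply: nondeg => y; apply/eqP; apply/negP => /negP hb.
set b := ip x y in hb.
set t := - (ip y y + 1) / (2 * b).
have := ip_ge0 (t *: x + y); rewrite ip_exp hx -/b.
have -> : 2 * t * b = - (ip y y + 1) by rewrite /t; field.
lra.
Qed.

Lemma Gm_unit : Gm \in unitmx.
Proof.
rewrite -row_free_unit -kermx_eq0; apply/eqP/row_matrixP => i.
rewrite row0; apply: nondeg => x.
by rewrite ipE -row_mul mulmx_ker row0 dotE0l.
Qed.

Definition iG := invmx Gm.

Lemma hatK e : (e *m iG) *m Gm = e.
Proof. exact: (mulmxKV Gm_unit). Qed.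

Lemma hatKV v : (v *m Gm) *m iG = v.
Proof. exact: (mulmxK Gm_unit). Qed.

Lemma ip_hat e x : ip (e *m iG) x = dotE e x.
Proof. by rewrite ipE hatK. Qed.

Lemma dotE_swap x y : dotE x (y *m iG) = dotE y (x *m iG).
Proof. by rewrite -ip_hat ipC ip_hat. Qed.

Lemma eff_cone e : effects Om e -> cone Om (e *m iG).
Proof.
move=> he; apply/cone_dualP => x [l [w [hl [hw ->]]]].
by rewrite ipC ip_hat dotEZr mulr_ge0 //; case/andP: (he w hw).
Qed.

Hypothesis hne : exists w, Om w.

Lemma ip_conv (t : R) y z :
  ip (t *: y + (1 - t) *: z) (t *: y + (1 - t) *: z) =
  t * ip y y + (1 - t) * ip z z - t * (1 - t) * ip (y - z) (y - z).
Proof.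
rewrite !ipDl !ipDr !ipZl !ipZr !ipNl !ipNr [ip z y]ipC; ring.
Qed.

Lemma exists_max : exists x0, extreme_point Om x0 /\
  forall y, Om y -> ip y y <= ip x0 x0.
Proof.
have hc : {within Om, continuous (fun x => ip x x)}.
  apply: continuous_subspaceT.
  have -> : (fun x => ip x x) = (fun x => dotE (x *m Gm) x).
    by apply: funext => x; rewrite ipE.
  exact: cont_quad.
have hne' : Om !=set0 by case: hne => w hw; exists w.
have [x0 hx0 hmax] := EVT_max_rV hne' hOm.1 hc.
rewrite in_setE in hx0.
have hmax' : forall y, Om y -> ip y y <= ip x0 x0.
  by move=> y hy; apply: hmax; rewrite in_setE.
exists x0; split => //; split => // y z t hy hz /andP[t0 t1] ex0.
have hq := ip_conv t y z; rewrite -ex0 in hq.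
have hy' := hmax' y hy; have hz' := hmax' z hz.
have a1 : t * ip y y <= t * ip x0 x0 by rewrite ler_wpM2l // ltW.
have a2 : (1 - t) * ip z z <= (1 - t) * ip x0 x0 by rewrite ler_wpM2l // subr_ge0 ltW.
have pt : 0 < t * (1 - t) by rewrite mulr_gt0 // subr_gt0.
have hQ : t * (1 - t) * ip (y - z) (y - z) <= 0 by lra.
have Q0 : ip (y - z) (y - z) = 0.
  apply/eqP; rewrite eq_le ip_ge0 andbT.
  by rewrite -(pmulr_rle0 _ pt).
have yz : y = z by apply/eqP; rewrite -subr_eq0; apply/eqP; exact: ip_pd.
subst z.
have -> : x0 = y by rewrite ex0 -scalerDl subrKC scale1r.
by [].
Qed.

Lemma qmax w : extreme_point Om w -> forall y, Om y -> ip y y <= ip w w.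
Proof.
move=> hw y hy; have [x0 [hx0 hmax]] := exists_max.
have [T [hT eT]] := htr _ _ hx0 hw.
by rewrite -eT ip_inv //; apply: hmax.
Qed.

Lemma sub_eq y w (a b : R) : Om y -> Om w -> 0 < a -> a *: y = b *: w -> y = w.
Proof.
move=> hy hw ha e.
have := congr1 (fun v => dotE u v) e; rewrite /= !dotEZr !hu // !mulr1 => eab.
subst b; apply: (scalerI (a := a)); first by rewrite gt_eqF.
exact: e.
Qed.

Lemma dotE_hatG c v x : dotE (c *: (v *m Gm)) x = c * ip v x.
Proof. by rewrite dotEZl ipE. Qed.

Lemma ip_Om_ge0 v x : Om v -> Om x -> 0 <= ip v x.
Proof. by move=> hv hx; rewrite ipC; apply/(cone_dualP _).1; apply: Om_cone. Qed.

Lemma pure_ind e : pure_effect Om e -> indecomposable Om e ->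
  exists l w, 0 < l /\ Om w /\ e = l *: (w *m Gm) /\ dotE e w = 1.
Proof.
move=> hpure [he [ne0 hdec]].
have [l [w [hl [hw ehat]]]] := eff_cone _ he.
have ee : e = l *: (w *m Gm) by rewrite -(hatK e) ehat scalemxAl.
have lpos : 0 < l.
  rewrite lt_neqAle hl andbT; apply/eqP => l0.
  by move: ne0; rewrite ee -l0 scale0r eqxx.
have wext : extreme_point Om w.
  split => // y z s hy hz /andP[s0 s1] hwyz.
  set e1 := (l * s) *: (y *m Gm); set e2 := (l * (1 - s)) *: (z *m Gm).
  have he12 : e = e1 + e2.
    by rewrite ee hwyz mulmxDl -!scalemxAl scalerDr !scalerA.
  have p1 : forall x, Om x -> 0 <= dotE e1 x.
    move=> x hx; rewrite dotE_hatG mulr_ge0 ?ip_Om_ge0 //.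
    by rewrite mulr_ge0 // ltW.
  have p2 : forall x, Om x -> 0 <= dotE e2 x.
    move=> x hx; rewrite dotE_hatG mulr_ge0 ?ip_Om_ge0 //.
    by rewrite mulr_ge0 // subr_ge0 ltW.
  have eff1 : effects Om e1.
    move=> x hx; rewrite p1 //=; have := he x hx; rewrite he12 dotEDl.
    have := p2 x hx; lra.
  have eff2 : effects Om e2.
    move=> x hx; rewrite p2 //=; have := he x hx; rewrite he12 dotEDl.
    have := p1 x hx; lra.
  have [[c1 hc1] [c2 hc2]] := hdec e1 e2 eff1 eff2 he12.
  split.
  - apply: (sub_eq _ _ (l * s) (c1 * l)) => //; first by rewrite mulr_gt0.
    have := congr1 (fun v => v *m iG) hc1; rewrite /= /e1 ee.
    by rewrite -!scalemxAl !hatKV scalerA.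
  - apply: (sub_eq _ _ (l * (1 - s)) (c2 * l)) => //.
      by rewrite mulr_gt0 // subr_gt0.
    have := congr1 (fun v => v *m iG) hc2; rewrite /= /e2 ee.
    by rewrite -!scalemxAl !hatKV scalerA.
set t := dotE e w.
have et : t = l * ip w w by rewrite /t {1}ee dotE_hatG.
have qw : 0 < ip w w.
  rewrite lt_neqAle ip_ge0 andbT; apply/eqP => /esym /ip_pd w0.
  by apply: Om0; rewrite -w0.
have tpos : 0 < t by rewrite et mulr_gt0.
have bnd : forall x, Om x -> dotE e x <= t.
  move=> x hx; rewrite et ee dotE_hatG ler_wpM2l //.
  have := ip_ge0 (w - x); rewrite !ipDl !ipDr !ipNl !ipNr [ip x w]ipC.
  have := qmax _ wext _ hx; lra.
have t1 : t <= 1 by case/andP: (he w hw).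
exists l, w; split => //; split => //; split => //.
apply/eqP; rewrite eq_le t1 /=; rewrite leNgt; apply/negP => tlt1.
set e' := t^-1 *: e.
have eff' : effects Om e'.
  move=> x hx; rewrite /e' dotEZl.
  have [h0 h1] := andP (he x hx).
  apply/andP; split.
    by rewrite mulr_ge0 // invr_ge0 ltW.
  by rewrite ler_pdivrMl // mulr1; apply: bnd.
have eff0 : effects Om (0 : 'rV[R]_n).
  by move=> x hx; rewrite dotE0l lexx ler01.
have ee' : e = t *: e' + (1 - t) *: 0.
  by rewrite scaler0 addr0 /e' scalerA mulfV ?gt_eqF // scale1r.
have [_ e0] := hpure.2 e' 0 t eff' eff0 (ltac:(by rewrite tpos tlt1)) ee'.
by move: ne0; rewrite -e0 eqxx.
Qed.

Lemma hat_of_pure e : pure_effect Om e -> indecomposable Om e ->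
  exists l w, 0 <= l /\ Om w /\ e *m iG = l *: w /\ dotE e w = 1.
Proof.
move=> hp hi; have [l [w [lp [hw [ee e1]]]]] := pure_ind e hp hi.
exists l, w; split; first exact: ltW.
by split => //; split => //; rewrite {1}ee -scalemxAl hatKV.
Qed.

Lemma sum_ge1 k (e : 'I_k -> V) (I : {set 'I_k}) i w :
  (forall j, effects Om (e j)) -> Om w -> i \in I -> dotE (e i) w = 1 ->
  1 <= \sum_(j in I) dotE (e j) w.
Proof.
move=> he hw iI e1; rewrite (bigD1 i) //= e1 lerDl.
by apply: sumr_ge0 => j _; case/andP: (he j w hw).
Qed.

Lemma ideal_key (A : finType) (f : A -> V) : ideal_observable Om u f ->
  forall a, dotE (f a) (f a *m iG) = dotE u (f a *m iG).
Proof.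
move=> [[hfe [hfs _]] hid] a.
have [k [e [I [hei hfa]]]] := hid a.
have hee : forall j, effects Om (e j) by move=> j; exact: (hei j).1.1.
apply/eqP; rewrite -subr_eq0 -dotEBl; apply/eqP.
case: hfa => efa.
- rewrite {2}efa mulmx_suml dotE_sumr; apply: big1 => i iI.
  have [l [w [hl [hw [ew e1]]]]] := hat_of_pure _ (hei i).1 (hei i).2.
  rewrite ew dotEZr dotEBl hu //.
  have : dotE (f a) w = 1.
    apply/eqP; rewrite eq_le; case/andP: (hfe a w hw) => _ -> /=.
    by rewrite efa dotE_suml (sum_ge1 _ _ _ _ _ hee hw iI e1).
  by move=> ->; rewrite subrr mulr0.
- have -> : f a - u = - \sum_(i in I) e i by rewrite efa addrAC subrr add0r.
  rewrite dotENl dotE_suml; apply/eqP; rewrite oppr_eq0; apply/eqP.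
  apply: big1 => i iI; rewrite dotE_swap.
  have [l [w [hl [hw [ew e1]]]]] := hat_of_pure _ (hei i).1 (hei i).2.
  rewrite ew dotEZr.
  have : dotE (f a) w = 0.
    apply/eqP; rewrite eq_le; case/andP: (hfe a w hw) => -> _; rewrite andbT.
    rewrite efa dotEBl hu // dotE_suml subr_le0.
    exact: (sum_ge1 _ _ _ _ _ hee hw iI e1).
  by move=> ->; rewrite mulr0.
Qed.

Lemma cone_decomp e : effects Om e ->
  exists l w, 0 <= l /\ Om w /\ e *m iG = l *: w /\ dotE u (e *m iG) = l.
Proof.
move=> he; have [l [w [hl [hw ew]]]] := eff_cone e he.
by exists l, w; rewrite ew dotEZr hu // mulr1.
Qed.

Lemma nonneg_term e e' : effects Om e -> effects Om e' -> 0 <= dotE e (e' *m iG).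
Proof.
move=> he he'; have [l [w [hl [hw [ew _]]]]] := cone_decomp e' he'.
by rewrite ew dotEZr mulr_ge0 //; case/andP: (he w hw).
Qed.

Lemma u_eff : effects Om u.
Proof. by move=> w hw; rewrite hu // ler01 lexx. Qed.

Lemma U_pos : 0 < dotE u (u *m iG).
Proof.
rewrite -ip_hat lt_neqAle ip_ge0 andbT; apply/eqP => /esym /ip_pd h.
case: hne => w hw; have := hu w hw.
by rewrite -(hatK u) h mul0mx dotE0l => /eqP; rewrite eq_sym oner_eq0.
Qed.

Lemma side (A : finType) (d : A -> A -> R) (hd : metric d) (f : A -> V)
  (hf : ideal_observable Om u f) (J : finType) (m : J -> V)
  (hm : observable Om u m) (pi : J -> A) (mF : A -> V)
  (hmarg : forall (phi : A -> R) v,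
     \sum_p phi (pi p) * dotE (m p) v = \sum_a phi a * dotE (mF a) v)
  (e1 e : R) (he1 : 0 < e1) (he : 0 <= e) :
  exists D, 0 <= D /\
   \sum_p \sum_a' d a' (pi p) * dotE (f a') (m p *m iG) <= dotE u (u *m iG) * D /\
   forall w, Om w -> forall a, e1 * (\sum_a' d a' a * dotE (f a') w) <= e * D ->
     ((e1 / 2 * overall_width d f e w)%:E <= werner_D Om d mF f)%E.
Proof.
have [[hfe [hfs _]] _] := hf.
have key := ideal_key A f hf.
have [hd0 [hdeq [hdsym hdtri]]] := hd.
set SX := \sum_p \sum_a' d a' (pi p) * dotE (f a') (m p *m iG).
have SX0 : 0 <= SX.
  apply: sumr_ge0 => p _; apply: sumr_ge0 => a' _.
  by rewrite mulr_ge0 // nonneg_term //; case: hm => hme _; apply: hme.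
have hU := U_pos.
have w0 := werner_ge0 _ _ _ _ _ hd f mF hne.
case hD: (werner_D Om d mF f) => [r| |]; last by rewrite hD in w0.
- exists r; rewrite hD lee_fin in w0; split => //; split; last first.
    move=> w hw a H; rewrite lee_fin.
    apply: (width_bound _ _ _ _ _ _ _ _ _ _ (hd0) _ _ w0 he1 he H).
      by move=> a'; case/andP: (hfe a' w hw).
    by rewrite -dotE_suml hfs hu.
  rewrite /SX exchange_big /=.
  under eq_bigr => a' _ do under eq_bigr => p _ do rewrite dotE_swap.
  under eq_bigr => a' _ do rewrite (hmarg (d a')).
  have -> : dotE u (u *m iG) * r = \sum_a' dotE u (f a' *m iG) * r.
    by rewrite -mulr_suml -dotE_sumr -mulmx_suml hfs.
  apply: ler_sum => a' _.
  have [l [w [hl [hw [ew eu]]]]] := cone_decomp _ (hfe a').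
  rewrite eu ew.
  have [->|lnz] := eqVneq l 0.
    by rewrite mul0r big1 // => a _; rewrite scale0r dotE0r mulr0.
  have fw : dotE (f a') w = 1.
    have := key a'; rewrite ew !dotEZr hu // mulr1 => /eqP.
    by rewrite -{2}(mulr1 l) (inj_eq (mulfI lnz)) => /eqP.
  under eq_bigr => a _ do rewrite dotEZr mulrCA.
  rewrite -mulr_sumr ler_wpM2l //.
  have := werner_le _ _ _ _ _ d hd f mF hfe hfs hu r hD w a' hw fw.
  by under eq_bigr => a _ do rewrite hdsym.
- exists (SX / dotE u (u *m iG)); split; first by rewrite divr_ge0 // ltW.
  split; first by rewrite mulrC divfK ?gt_eqF.
  by move=> w hw a _; rewrite leey.
Qed.

End GPTproof.

End Helpers.
Import Helpers.

Theorem corollary3p1 (R : realType) (N : nat)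
  (Om : set 'rV[R]_N.+1) (u : 'rV[R]_N.+1)
  (hOm : state_space Om) (hu : unit_effect Om u)
  (htrans : transitive_ss Om) (hsd : self_dual_GL Om)
  (A B : finType) (dA : A -> A -> R) (dB : B -> B -> R)
  (hdA : metric dA) (hdB : metric dB)
  (f : A -> 'rV[R]_N.+1) (g : B -> 'rV[R]_N.+1)
  (hf : ideal_observable Om u f) (hg : ideal_observable Om u g)
  (m : A * B -> 'rV[R]_N.+1) (hm : observable Om u m)
  (eps1 eps2 : R) (he1 : 0 < eps1 <= 1) (he2 : 0 < eps2 <= 1)
  (he12 : eps1 + eps2 <= 1) :
  exists w, Om w /\
    lee (eps1 / 2 * overall_width dA f (eps1 + eps2) w)%:E
        (werner_D Om dA (fun a => \sum_(b : B) m (a, b)) f) /\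
    lee (eps2 / 2 * overall_width dB g (eps1 + eps2) w)%:E
        (werner_D Om dB (fun b => \sum_(a : A) m (a, b)) g).
Proof.
have [mu [hmu hsdeq]] := hsd.
have hne : exists w, Om w.
  case: hOm => _ [_ [hsp _]].
  have [k [w [c [hw hv]]]] := hsp (const_mx 1).
  case: k w c hw hv => [|k] w c hw hv; last by exists (w ord0).
  have := congr1 (fun M : 'rV[R]_N.+1 => M 0 0) hv.
  by rewrite big_ord0 !mxE => /eqP; rewrite oner_eq0.
have [e1p _] := andP he1; have [e2p _] := andP he2.
have ep : 0 <= eps1 + eps2 by rewrite addr_ge0 // ltW.
have margF : forall (phi : A -> R) v,
    \sum_(p : A * B) phi p.1 * dotE (m p) v =
    \sum_a phi a * dotE (\sum_(b : B) m (a, b)) v.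
  move=> phi v.
  under [RHS]eq_bigr => a _ do rewrite dotE_suml mulr_sumr.
  by rewrite pair_big /=; apply: eq_bigr => -[a b] _.
have margG : forall (phi : B -> R) v,
    \sum_(p : A * B) phi p.2 * dotE (m p) v =
    \sum_b phi b * dotE (\sum_(a : A) m (a, b)) v.
  move=> phi v.
  under [RHS]eq_bigr => b _ do rewrite dotE_suml mulr_sumr.
  by rewrite exchange_big pair_big /=; apply: eq_bigr => -[a b] _.
have [DF [hDF [hSX hWF]]] := side _ _ _ _ _ hOm hu htrans hmu hsdeq hne A dA hdA f hf
   _ m hm fst _ margF eps1 (eps1 + eps2) e1p ep.
have [DG [hDG [hSY hWG]]] := side _ _ _ _ _ hOm hu htrans hmu hsdeq hne B dB hdB g hg
   _ m hm snd _ margG eps2 (eps1 + eps2) e2p ep.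
set iGm := iG R N.+1 mu in hSX hSY.
have hme := hm.1.
have hfe := hf.1.1.
have hge := hg.1.1.
have hdA0 := hdA.1.
have hdB0 := hdB.1.
have nt := nonneg_term _ _ _ _ _ hOm hu hmu hsdeq.
have cd := cone_decomp _ _ _ _ _ hOm hu hmu hsdeq.
have hU : \sum_(p : A * B) dotE u (m p *m iGm) = dotE u (u *m iGm).
  by rewrite -dotE_sumr -mulmx_suml hm.2.1.
have Upos := U_pos _ _ _ _ _ hOm hu hmu hsdeq hne.
have h0 : forall p : A * B, dotE u (m p *m iGm) = 0 ->
    \sum_a' dA a' p.1 * dotE (f a') (m p *m iGm) = 0 /\
    \sum_b' dB b' p.2 * dotE (g b') (m p *m iGm) = 0.
  move=> p mp; have [l [w [hl [hw [ew eu]]]]] := cd _ (hme p).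
  rewrite eu in mp; rewrite ew mp scale0r.
  by split; apply: big1 => ? _; rewrite dotE0r mulr0.
have hU' : 0 < \sum_(p : A * B) dotE u (m p *m iGm) by rewrite hU.
rewrite -hU in hSX hSY.
have [p [hp [hX hY]]] := choice_lemma _ _
  (fun p : A * B => \sum_a' dA a' p.1 * dotE (f a') (m p *m iGm))
  (fun p => \sum_b' dB b' p.2 * dotE (g b') (m p *m iGm))
  (fun p => dotE u (m p *m iGm)) DF DG eps1 eps2
  (fun p => sumr_ge0 _ (fun a' _ => mulr_ge0 (hdA0 _ _) (nt _ _ (hfe a') (hme p))))
  (fun p => sumr_ge0 _ (fun b' _ => mulr_ge0 (hdB0 _ _) (nt _ _ (hge b') (hme p))))
  (fun p => nt _ _ (u_eff _ _ _ _ hu) (hme p)) h0 hU' hSX hSY hDF hDG e1p e2p.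
have [l [w [hl [hw [ew eu]]]]] := cd _ (hme p).
rewrite /= eu in hp hX hY; rewrite /= ew in hX hY.
have hX' : eps1 * (\sum_a' dA a' p.1 * dotE (f a') w) <= (eps1 + eps2) * DF.
  rewrite -(ler_pM2l hp); move: hX.
  under eq_bigr => a' _ do rewrite dotEZr mulrCA.
  by rewrite -mulr_sumr; lra.
have hY' : eps2 * (\sum_b' dB b' p.2 * dotE (g b') w) <= (eps1 + eps2) * DG.
  rewrite -(ler_pM2l hp); move: hY.
  under eq_bigr => b' _ do rewrite dotEZr mulrCA.
  by rewrite -mulr_sumr; lra.
exists w; split => //; split.
  exact: hWF w hw p.1 hX'.
exact: hWG w hw p.2 hY'.
Qed.
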